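(* A $po$-$\Gamma$-semigroup $M$ is right regular if and only if for every fuzzy subset $f$ of $M$ we have $f\preceq (f\circ f)\circ 1$.
   Context: Let $M$ and $\Gamma$ be nonempty sets with a map $M\times\Gamma\times M\to M$, $(a,\gamma,b)\mapsto a\gamma b$, satisfying $(a\gamma b)\mu c=a\gamma(b\mu c)$ for all $a,b,c\in M$, $\gamma,\mu\in\Gamma$. A $po$-$\Gamma$-semigroup is such an $M$ with a partial order $\le$ such that $a\le b$ implies $a\gamma c\le b\gamma c$ and $c\gamma a\le c\gamma b$ for all $c\in M$, $\gamma\in\Gamma$. For $H\subseteq M$, $(H]=\{t\in M: t\le h \text{ for some } h\in H\}$; $a\Gamma a\Gamma M=\{a\gamma a\mu x: x\in M,\gamma,\mu\in\Gamma\}$. $M$ is right regular if $a\in(a\Gamma a\Gamma M]$ for every $a\in M$. A fuzzy subset of $M$ is a map $M\to[0,1]$; $1$ is the constant fuzzy subset with value $1$. For $c\in M$ let $A_c=\{(y,z)\in M\times M: c\le y\gamma z \text{ for some }\gamma\in\Gamma\}$. $(f\circ g)(c)=\bigvee_{(y,z)\in A_c}\min\{f(y),g(z)\}$ if $A_c\ne\emptyset$, and $0$ otherwise. $f\preceq g$ means $f(c)\le g(c)$ for all $c\in M$. *)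

(* Defs.v *)
From HB Require Import structures.
From mathcomp Require Import all_boot all_order all_algebra.
From mathcomp Require Import boolp classical_sets reals.
Set Implicit Arguments. Unset Strict Implicit. Unset Printing Implicit Defensive.
Import Order.TTheory GRing.Theory Num.Theory.
Local Open Scope classical_set_scope.
Local Open Scope ring_scope.

Section PoGamma.
Variables (M G : Type) (op : M -> G -> M -> M) (le : M -> M -> Prop).

Definition po_gamma_semigroup : Prop :=
  [/\ inhabited M, inhabited G,
      (forall a b c (g m : G), op (op a g b) m c = op a g (op b m c)),
      (forall a, le a a) /\
      (forall a b, le a b -> le b a -> a = b) /\
      (forall a b c, le a b -> le b c -> le a c) &
      (forall a b c (g : G), le a b -> le (op a g c) (op b g c) /\ le (op c g a) (op c g b))].

(* a \in (a Gamma a Gamma M] *)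
Definition right_regular : Prop :=
  forall a : M, exists (x : M) (g m : G), le a (op (op a g a) m x).

Variable R : realType.

Definition fuzzy (f : M -> R) : Prop := forall x, 0 <= f x <= 1.

Definition A_set (c : M) : set (M * M) :=
  [set p | exists g : G, le c (op p.1 g p.2)].

Definition fcomp (f g : M -> R) : M -> R := fun c =>
  if pselect (A_set c !=set0) then
    sup [set Order.min (f p.1) (g p.2) | p in A_set c]
  else 0.

Definition fone : M -> R := fun _ => 1.

Definition fle (f g : M -> R) : Prop := forall c, f c <= g c.

End PoGamma.

(* Main.v *)
Require Import Defs.
From mathcomp Require Import all_boot all_order all_algebra.
From mathcomp Require Import boolp classical_sets reals.
Import Order.TTheory GRing.Theory Num.Theory.
Local Open Scope classical_set_scope.
Local Open Scope ring_scope.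

Section Aux.
Variables (R : realType) (M G : Type) (op : M -> G -> M -> M) (le : M -> M -> Prop).

Lemma fcomp_ge (f g : M -> R) c p (B : R) :
  (forall q, Order.min (f q.1) (g q.2) <= B) ->
  A_set op le c p -> Order.min (f p.1) (g p.2) <= fcomp op le f g c.
Proof.
move=> HB Hp; rewrite /fcomp; case: pselect => [Hne0|Hn]; last first.
  by exfalso; apply: Hn; exists p.
have Hub : has_ubound [set Order.min (f q.1) (g q.2) | q in A_set op le c].
  by exists B => y [q _ <-].
by apply: (ub_le_sup Hub); exists p.
Qed.

Lemma fcomp_pos (f g : M -> R) c : 0 < fcomp op le f g c ->
  exists2 p, A_set op le c p & 0 < Order.min (f p.1) (g p.2).
Proof.
rewrite /fcomp; case: pselect => [Hne|Hn0]; last by rewrite ltxx.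
move=> Hs; apply: contrapT => Hn.
have : sup [set Order.min (f p.1) (g p.2) | p in A_set op le c] <= 0.
  apply: ge_sup.
    by have [p Hp] := Hne; exists (Order.min (f p.1) (g p.2)); exists p.
  move=> y [q Hq <-]; rewrite leNgt; apply/negP => H; apply: Hn; by exists q.
by rewrite leNgt Hs.
Qed.
End Aux.

Theorem theorem26 (R : realType) (M G : Type) (op : M -> G -> M -> M)
  (le : M -> M -> Prop) (HM : po_gamma_semigroup op le) :
  right_regular op le <->
  (forall f : M -> R, fuzzy f ->
     fle f (fcomp op le (fcomp op le f f) (@fone M R))).
Proof.
case: HM => _ _ Hass [Hrefl [Hanti Htrans]] Hcomp.
split.
- move=> Hrr f Hf a.
  have [x [g [m Ha]]] := Hrr a.
  have Hf1 : forall t, f t <= 1 by move=> t; case/andP: (Hf t).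
  have H1 : f a <= fcomp op le f f (op a g a).
    have := @fcomp_ge R M G op le f f (op a g a) (a, a) 1.
    rewrite /= minxx; apply.
      by move=> q; rewrite ge_min Hf1.
    by exists g; apply: Hrefl.
  have H2 := @fcomp_ge R M G op le (fcomp op le f f) (@fone M R) a (op a g a, x) 1.
  rewrite /= /fone in H2.
  apply: le_trans (H2 _ _); first by rewrite le_min H1 Hf1.
    by move=> q; rewrite ge_min lexx orbT.
  by exists m.
- move=> H a.
  pose f : M -> R := fun t => if pselect (t = a) then 1 else 0.
  have Hf : fuzzy f.
    by move=> t; rewrite /f; case: pselect => [h|h]; rewrite ?lexx ?ler01.
  have Hfa : f a = 1 by rewrite /f; case: pselect => [h|h] //.
  have := H f Hf a; rewrite Hfa => H1.
  have H0 : (0:R) < fcomp op le (fcomp op le f f) (@fone M R) a.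
    exact: (lt_le_trans ltr01 H1).
  have [[y z] [m Hyz] /=] := @fcomp_pos R M G op le _ _ _ H0.
  rewrite lt_min => /andP[Hy _].
  have [[p1 p2] [g Hp] /=] := @fcomp_pos R M G op le _ _ _ Hy.
  rewrite lt_min /f; case: pselect => [e1|e1]; last by rewrite ltxx.
  case: pselect => [e2 _|e2]; last by rewrite ltxx andbF.
  subst p1 p2.
  exists z, g, m; apply: Htrans Hyz _.
  by case: (Hcomp _ _ z m Hp).
Qed.
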